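(* Let $\Sigma=(\mathbb{N}_0,X,U,\mathscr{U},\phi)$ be a control system as in the standing setup and let $Q\subset X$ be a control set with $\operatorname{cl}\operatorname{Int}(Q)=\operatorname{cl}Q$. Then $Q$ is either mean equi-invariant or mean unstable.
   Context: Standing setup: $(X,d)$ is a metric space, $U$ is a compact metric space, and $F:X\times U\to X$ is a map such that $F_u:=F(\cdot,u)$ is continuous for every $u\in U$. Let $\mathscr U=U^{\mathbb N_0}$ with the product topology. For $\omega=(\omega_0,\omega_1,\dots)\in\mathscr U$, $x\in X$, set $\phi(0,x,\omega)=x$ and $\phi(k,x,\omega)=F_{\omega_{k-1}}\circ\cdots\circ F_{\omega_0}(x)$ for $k\ge1$. It is assumed that $\phi:\mathbb N_0\times X\times\mathscr U\to X$ is continuous. Notation: $B(x,\delta)$ is the open ball; $d(y,Q)=\inf_{q\in Q}d(y,q)$; $\operatorname{Int}$ and $\operatorname{cl}$ denote interior and closure in $X$. Control set: $D\subset X$ is a control set if (i) for every $x\in D$ there is $\omega\in\mathscr U$ with $\phi(k,x,\omega)\in D$ for all $k\in\mathbb N_0$; (ii) for every $x\in D$, $D\subset\operatorname{cl}\mathcal O^+(x)$, where $\mathcal O^+(x)=\{\phi(m,x,\omega):m\in\mathbb N_0,\omega\in\mathscr U\}$; (iii) $D$ is maximal with (i) and (ii). $x\in Q$ is a mean equi-invariant point of $Q$ if for every $\varepsilon>0$ there exist $\delta>0$ and $\omega\in\mathscr U$ such that $\limsup_{n\to\infty}\frac1n\sum_{i=0}^{n-1}d(\phi(i,y,\omega),Q)<\varepsilon$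 for all $y\in B(x,\delta)\cap Q$; $Q$ is mean equi-invariant if every point of $Q$ is such a point. $Q$ is mean unstable if there exists $\varepsilon>0$ such that for every $x\in Q$, every $\delta>0$ and every $\omega\in\mathscr U$ there exists $y\in B(x,\delta)\cap Q$ with $\limsup_{n\to\infty}\frac1n\sum_{i=0}^{n-1}d(\phi(i,y,\omega),Q)\ge\varepsilon$. *)

(* Defs.v *)
From HB Require Import structures.
From mathcomp Require Import all_boot all_order all_algebra.
From mathcomp Require Import all_classical all_reals all_analysis.
Set Implicit Arguments. Unset Strict Implicit. Unset Printing Implicit Defensive.
Import Order.TTheory GRing.Theory Num.Theory.
Local Open Scope classical_set_scope.
Local Open Scope ring_scope.

Section Defs.
Context {R : realType} {X U : metricType R}.

Definition ctrl := {ptws nat -> U}.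

Fixpoint phi (F : X -> U -> X) (k : nat) (x : X) (w : ctrl) : X :=
  match k with
  | 0 => x
  | k'.+1 => F (phi F k' x w) (w k')
  end.

Definition orbitp (F : X -> U -> X) (x : X) : set X :=
  [set y | exists m w, y = phi F m x w].

Definition ctrl_set_props (F : X -> U -> X) (D : set X) : Prop :=
  (forall x, D x -> exists w : ctrl, forall k, D (phi F k x w)) /\
  (forall x, D x -> D `<=` closure (orbitp F x)).

Definition control_set (F : X -> U -> X) (D : set X) : Prop :=
  ctrl_set_props F D /\
  (forall D', ctrl_set_props F D' -> D `<=` D' -> D' = D).

Definition dist_set (Q : set X) (y : X) : R := inf [set mdist y q | q in Q].

Definition mean_dev (F : X -> U -> X) (Q : set X) (y : X) (w : ctrl) : \bar R :=
  limn_esup (fun n : nat =>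
    ((n%:R)^-1 * \sum_(i < n) dist_set Q (phi F i y w))%:E).

Definition mean_equi_invariant_point (F : X -> U -> X) (Q : set X) (x : X) : Prop :=
  Q x /\
  forall eps : R, 0 < eps -> exists delta : R, 0 < delta /\ exists w : ctrl,
    forall y, mdist x y < delta -> Q y -> (mean_dev F Q y w < eps%:E)%E.

Definition mean_equi_invariant (F : X -> U -> X) (Q : set X) : Prop :=
  forall x, Q x -> mean_equi_invariant_point F Q x.

Definition mean_unstable (F : X -> U -> X) (Q : set X) : Prop :=
  exists eps : R, 0 < eps /\
    forall x, Q x -> forall delta : R, 0 < delta -> forall w : ctrl,
      exists y, mdist x y < delta /\ Q y /\ (eps%:E <= mean_dev F Q y w)%E.

End Defs.

(* Main.v *)
Require Import Defs.
From HB Require Import structures.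
From mathcomp Require Import all_boot all_order all_algebra.
From mathcomp Require Import all_classical all_reals all_analysis.
Import Order.TTheory GRing.Theory Num.Theory.
Local Open Scope classical_set_scope.
Local Open Scope ring_scope.

Lemma esup_lt (R : realType) (u : nat -> \bar R) (e : R) :
  (limn_esup u < e%:E)%E ->
  exists e' : R, e' < e /\ exists N, forall n, (N <= n)%N -> (u n <= e'%:E)%E.
Proof.
rewrite /limn_esup /limf_esup => /ereal_inf_lt [s [V HV <-] lt].
have hs : forall n, V n -> (u n <= ereal_sup [set u x | x in V])%E.
  by move=> n Vn; apply: ereal_sup_ubound; exists n.
move: HV => [N _ HN].
move: hs lt; case: (ereal_sup _) => [r| |] hs lt.
- exists r; split; first by rewrite -lte_fin.
  by exists N => n Nn; apply: hs; apply: HN.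
- by [].
- exists (e - 1); split; first by rewrite ltrBlDr ltrDl.
  by exists N => n Nn; apply: (le_trans (hs n (HN n Nn))); rewrite leNye.
Qed.

Lemma esup_le (R : realType) (u : nat -> \bar R) (c : R) N :
  (forall n, (N <= n)%N -> (u n <= c%:E)%E) -> (limn_esup u <= c%:E)%E.
Proof.
move=> H; rewrite /limn_esup /limf_esup.
apply: (@le_trans _ _ (ereal_sup [set u x | x in [set n | (N <= n)%N]])).
  apply: ereal_inf_lbound; exists [set n | (N <= n)%N] => //.
  by exists N.
by apply: ge_ereal_sup => _ [n Nn <-]; apply: H.
Qed.
From mathcomp Require Import lra zify.
Lemma shift_mean (R : realType) (a b : nat -> R) (m : nat) (e : R) : 0 < e ->
 (forall n, (m <= n)%N -> \sum_(i < n) a i = \sum_(i < m) a i + \sum_(i < n - m) b i) ->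
 (limn_esup (fun n => ((n%:R)^-1 * \sum_(i<n) b i)%:E) < e%:E)%E ->
 (limn_esup (fun n => ((n%:R)^-1 * \sum_(i<n) a i)%:E) < e%:E)%E.
Proof.
move=> e0 hab /esup_lt [e' [e'e [N HN]]].
set c := Num.max e' (e/2).
have c0 : 0 < c by rewrite lt_max; apply/orP; right; rewrite divr_gt0.
have ce : c < e by rewrite gt_max e'e /=; lra.
set S := \sum_(i<m) a i.
set K := Num.truncn (`|S| * 2 / (e - c)).
have hK : `|S| * 2 < K.+1%:R * (e - c).
  rewrite -ltr_pdivrMr ?subr_gt0 //.
  have h0 : 0 <= `|S| * 2 / (e - c).
    by apply: divr_ge0; [apply: mulr_ge0 | lra].
  by case/andP: (truncn_itv h0).
apply: (@le_lt_trans _ _ ((c + (e - c)/2)%:E)); last by rewrite lte_fin; lra.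
apply: (@esup_le _ _ _ (N + m + K + 1)%N) => n hn.
rewrite lee_fin.
have hk : (N <= n - m)%N by lia.
have hk1 : (0 < n - m)%N by lia.
have := HN _ hk; rewrite lee_fin => hb.
rewrite hab; last by lia.
set k := (n - m)%N in hk hk1 hb *.
set T := \sum_(i < k) b i in hb *.
have kpos : (0 : R) < k%:R by rewrite ltr0n.
have npos : (0 : R) < n%:R by rewrite ltr0n; lia.
have hT : T <= k%:R * c.
  rewrite -ler_pdivrMl // mulrC; apply: le_trans (_ : _ <= e') _; [by rewrite mulrC | by rewrite le_max lexx].
have hkc : k%:R * c <= n%:R * c by rewrite ler_pM2r // ler_nat; lia.
have hKn : K.+1%:R * (e - c) <= n%:R * (e - c) by rewrite ler_pM2r ?subr_gt0 // ler_nat; lia.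
have hS : S <= `|S| := ler_norm S.
rewrite mulrC ler_pdivrMr //.
rewrite -/S.
nra.
Qed.

Lemma sum_split (R : realType) (a : nat -> R) m n : (m <= n)%N ->
  \sum_(i < n) a i = \sum_(i < m) a i + \sum_(i < n - m) a (i + m)%N.
Proof.
move=> hmn.
rewrite -(big_mkord xpredT a) -(big_mkord xpredT a) -(big_mkord xpredT (fun i => a (i + m)%N)).
rewrite (big_cat_nat (leq0n m) hmn) /=; congr (_ + _).
by rewrite -[in LHS](add0n m) big_addn.
Qed.

Definition catw (R : realType) (U : metricType R) (w1 w : @ctrl R U) (m : nat) : @ctrl R U :=
  fun k => if (k < m)%N then w1 k else w (k - m)%N.
Arguments catw {R U}.

Section PhiLemmas.
Variables (R : realType) (X U : metricType R) (F : X -> U -> X).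

Lemma phi_cat_le (w1 w : @ctrl R U) m y k : (k <= m)%N ->
  phi F k y (catw w1 w m) = phi F k y w1.
Proof.
elim: k => [//|k IH] hk /=; rewrite IH; last by lia.
by rewrite /catw hk.
Qed.

Lemma phi_cat_shift (w1 w : @ctrl R U) m y i :
  phi F (i + m) y (catw w1 w m) = phi F i (phi F m y w1) w.
Proof.
elim: i => [|i IH]; first by rewrite add0n phi_cat_le.
rewrite addSn /= IH /catw.
have -> : (i + m < m)%N = false by lia.
by rewrite addnK.
Qed.

Lemma phi_cont (hF : forall u : U, continuous (fun x : X => F x u)) m (w : @ctrl R U) :
  continuous (fun x => phi F m x w).
Proof.
elim: m => [|m IH] x /=; first exact: cvg_id.
exact: (continuous_comp (IH x) (hF (w m) (phi F m x w))).
Qed.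

Lemma mean_dev_shift (Q : set X) (w1 w : @ctrl R U) m y (e : R) : 0 < e ->
  (mean_dev F Q (phi F m y w1) w < e%:E)%E ->
  (mean_dev F Q y (catw w1 w m) < e%:E)%E.
Proof.
move=> e0; rewrite /mean_dev.
have := @shift_mean R (fun i => dist_set Q (phi F i y (catw w1 w m))) (fun i => dist_set Q (phi F i (phi F m y w1) w)) m e e0.
apply=> n hmn.
rewrite (@sum_split R (fun i => dist_set Q (phi F i y (catw w1 w m))) m n hmn); congr (_ + _).
by apply: eq_bigr => i _; rewrite phi_cat_shift.
Qed.
End PhiLemmas.

Lemma nbhs_in_ball (R : realType) (X : metricType R) (c p : X) r :
  mdist c p < r -> nbhs p (ball c r).
Proof.
move=> h; apply/nbhs_ballP; exists ((r - mdist c p) / 2); first by rewrite /=; lra.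
move=> q hq.
have hp : ball c ((mdist c p + r) / 2) p by rewrite ballEmdist /=; lra.
have := ball_triangle hp hq.
by have -> : (mdist c p + r) / 2 + (r - mdist c p) / 2 = r by lra.
Qed.

Lemma nnpp (P : Prop) : ~ ~ P -> P.
Proof. by case: (pselect P) => // p nn; exfalso; apply: nn. Qed.

Theorem mainTheorem12 (R : realType) (X U : metricType R) (F : X -> U -> X)
  (hU : compact [set: U])
  (hF : forall u : U, continuous (fun x : X => F x u))
  (hphi : continuous (fun p : nat * X * @ctrl R U => phi F p.1.1 p.1.2 p.2))
  (Q : set X) (hQ : control_set F Q)
  (hint : closure (interior Q) = closure Q) :
  mean_equi_invariant F Q \/ mean_unstable F Q.
Proof.
case: (pselect (mean_unstable F Q)) => [mu|nmu]; [by right|left].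
move=> x Qx; split => // e e0.
have [x0 [Qx0 [d0 [d00 [w0 Hw0]]]]] : exists x0, Q x0 /\ exists d0, 0 < d0 /\
    exists w0 : @ctrl R U, forall y, mdist x0 y < d0 -> Q y -> (mean_dev F Q y w0 < e%:E)%E.
  apply: nnpp => H; apply: nmu; exists e; split => // x0 Qx0 d d0 w.
  apply: nnpp => Hy; apply: H; exists x0; split => //; exists d; split => //.
  exists w => y dy Qy.
  rewrite ltNge; apply/negP => ley; apply: Hy; by exists y.
have : closure (interior Q) x0 by rewrite hint; apply: subset_closure.
move=> /(_ (ball x0 d0) (nbhsx_ballx x0 _ d00)) [x1 [intx1 bx1]].
have : nbhs x1 (Q `&` ball x0 d0).
  apply: filterI; first exact: intx1.
  by apply: nbhs_in_ball; move: bx1; rewrite ballEmdist.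
move=> /nbhs_ballP [r r0 hr].
have Qx1 : Q x1 by apply: interior_subset.
have := hQ.1.2 x Qx x1 Qx1 (ball x1 r) (nbhsx_ballx x1 _ r0).
move=> [z [[m [w1 ->]] bz]].
have : nbhs x ((fun x => phi F m x w1) @^-1` ball x1 r).
  apply: (@phi_cont R X U F hF m w1 x).
  by apply: nbhs_in_ball; move: bz; rewrite ballEmdist.
move=> /nbhs_ballP [d d0' hd].
exists d; split => //; exists (catw w1 w0 m) => y dy Qy.
apply: mean_dev_shift => //.
have hy : ball x d y by rewrite ballEmdist.
have [Qz bz'] := hr _ (hd y hy).
apply: Hw0 => //.
by move: bz'; rewrite ballEmdist.
Qed.
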